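(* There is a constant $C(\mathcal{X})<\infty$ such that for every $\rho_A\in\mathcal{P}(\mathcal{X})$ there exists a trajectory $(\rho,m)\in\mathcal{CE}(\rho_A,\mathbb{1})$ with continuous $\rho$ and $\mathcal{A}(\rho,m)\le C(\mathcal{X})$, such that moreover for every $h=1/N$, $N\in\mathbb{N}$, one has $(\mathcal{I}_h\rho,\mathrm{avg}_h m)\in\mathcal{CE}_h(\rho_A,\mathbb{1})$ and $\mathcal{A}_h(\mathcal{I}_h\rho,\mathrm{avg}_h m)\le C(\mathcal{X})$. Here $\mathbb{1}\in\mathcal{P}(\mathcal{X})$ is the uniform density $\mathbb{1}(x)=1$.
   Context: Setting: $\mathcal{X}$ finite, $Q:\mathcal{X}\times\mathcal{X}\to[0,\infty)$ with $Q(x,x)=0$, irreducible, reversible with respect to its stationary distribution $\pi>0$, $\sum\pi=1$ ($\pi(x)Q(x,y)=\pi(y)Q(y,x)$). $\mathcal{P}(\mathcal{X})=\{\rho\ge0:\sum_x\pi(x)\rho(x)=1\}$. $\langle\phi,\psi\rangle_\pi=\sum_x\phi\psi\pi$, $\langle\Phi,\Psi\rangle_Q=\frac12\sum_{x,y}\Phi\Psi Q(x,y)\pi(x)$, $(\nabla_{\mathcal{X}}\psi)(x,y)=\psi(x)-\psi(y)$, $(\mathrm{div}_{\mathcal{X}}\Psi)(x)=\frac12\sum_yQ(x,y)(\Psi(y,x)-\Psi(x,y))$. $\theta:[0,\infty)^2\to[0,\infty)$ is continuous, concave, 1-homogeneous, symmetric, $C^\infty$ on $(0,\infty)^2$, $\theta(0,s)=\theta(s,0)=0$,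 $\theta(s,s)=s$, $\theta>0$ on $(0,\infty)^2$, nondecreasing in each argument; $\theta=-\infty$ if an argument is negative. $\alpha(s,t,m)=m^2/\theta(s,t)$ if $\theta(s,t)>0$, $0$ if $\theta(s,t)=0=m$, $+\infty$ otherwise. $\mathcal{A}(\rho,m)=\frac12\int_0^1\sum_{x,y}\alpha(\rho(t,x),\rho(t,y),m(t,x,y))Q(x,y)\pi(x)\,dt$. $\mathcal{CE}(\rho_A,\rho_B)$: measurable pairs $(\rho,m)$ with $\int_0^1\langle\partial_t\varphi,\rho\rangle_\pi+\langle\nabla_{\mathcal{X}}\varphi,m\rangle_Q\,dt=\langle\varphi(1),\rho_B\rangle_\pi-\langle\varphi(0),\rho_A\rangle_\pi$ for all $\varphi\in C^1([0,1],\mathbb{R}^{\mathcal{X}})$. Time discretization: $N\in\mathbb{N}$, $h=1/N$, $t_i=ih$, $I_i=[t_i,t_{i+1})$. $V^1_{n,h}$: continuous $\psi:[0,1]\to\mathbb{R}^{\mathcal{X}}$ affine on each $I_i$; $V^0_{n,h}$, $V^0_{e,h}$: functions $[0,1]\to\mathbb{R}^{\mathcal{X}}$ resp. $\mathbb{R}^{\mathcal{X}\times\mathcal{X}}$ constant on each $I_i$ (value denoted $\psi(t_i)$). For $\psi\in V^1_{n,h}$, $(\partial_t\psi)(t_i)=(\psi(t_{i+1})-\psi(t_i))/h$. $\mathcal{CE}_h(\rho_A,\rho_B)$ is the set of $(\rho_h,m_h)\in V^1_{n,h}\times V^0_{e,h}$ with $\rho_h(t_0)=\rho_A$, $\rho_h(t_N)=\rho_B$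 and $\partial_t\rho_h(t_i)+\mathrm{div}_{\mathcal{X}}m_h(t_i)=0$ for $i=0,\dots,N-1$. $\mathrm{avg}_h$ maps a (vector-valued) measure or integrable function on $[0,1]$ to the element of $V^0_{n,h}$ (resp. $V^0_{e,h}$) whose value on $I_i$ is its average over $I_i$ (so $(\mathrm{avg}_h\psi)(t_i)=\frac12(\psi(t_i)+\psi(t_{i+1}))$ for $\psi\in V^1_{n,h}$). $\mathcal{A}_h(\rho,m)=\mathcal{A}(\mathrm{avg}_h\rho,\mathrm{avg}_hm)$. $\mathcal{I}_h:C^0([0,1],\mathbb{R}^{\mathcal{X}})\to V^1_{n,h}$ is Lagrange interpolation: $(\mathcal{I}_h\rho)(t_i)=\rho(t_i)$, $i=0,\dots,N$. *)

(* Defs.v *)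
From HB Require Import structures.
From mathcomp Require Import all_boot all_order all_algebra.
From mathcomp Require Import all_classical all_reals all_analysis.
Set Implicit Arguments. Unset Strict Implicit. Unset Printing Implicit Defensive.
Import Order.TTheory GRing.Theory Num.Theory.
Import numFieldNormedType.Exports.
Local Open Scope classical_set_scope.
Local Open Scope ring_scope.

Section Defs.
Context {R : realType} {X : finType}.

Definition I01 : set R := `[0%R, 1%R].

(* Q >= 0, Q(x,x) = 0, irreducible, reversible w.r.t. pi > 0 with sum pi = 1
   (detailed balance implies that pi is stationary). *)
Definition markov_setting (Q : X -> X -> R) (pi : X -> R) : Prop :=
  (((forall x y, 0 <= Q x y)) /\ ((forall x, Q x x = 0)) /\ ((forall x y, connect [rel a b | 0 < Q a b] x y)) /\ ((forall x, 0 < pi x)) /\ (\sum_x pi x = 1) /\ ((forall x y, pi x * Q x y = pi y * Q y x))).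

Definition density (pi : X -> R) (rho : X -> R) : Prop :=
  (forall x, 0 <= rho x) /\ \sum_x pi x * rho x = 1.

Definition ip_pi (pi : X -> R) (f g : X -> R) : R := \sum_x f x * g x * pi x.
Definition ip_Q (Q : X -> X -> R) (pi : X -> R) (F G : X -> X -> R) : R :=
  2^-1 * \sum_x \sum_y F x y * G x y * Q x y * pi x.
Definition gradX (f : X -> R) : X -> X -> R := fun x y => f x - f y.
Definition divX (Q : X -> X -> R) (F : X -> X -> R) : X -> R :=
  fun x => 2^-1 * \sum_y Q x y * (F y x - F x y).

Definition pd1 (f : R -> R -> R) : R -> R -> R := fun s t => derive1 (fun u => f u t) s.
Definition pd2 (f : R -> R -> R) : R -> R -> R := fun s t => derive1 (fun u => f s u) t.
Fixpoint iter_pd (w : seq bool) (f : R -> R -> R) : R -> R -> R :=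
  match w with
  | [::] => f
  | b :: w' => (if b then pd1 else pd2) (iter_pd w' f)
  end.
Definition smooth_on_pos (f : R -> R -> R) : Prop :=
  forall (w : seq bool) (s t : R), 0 < s -> 0 < t ->
    ((derivable (fun u => iter_pd w f u t) s 1) /\ (derivable (fun u => iter_pd w f s u) t 1) /\ ({for (s, t), continuous (fun p : R * R => iter_pd w f p.1 p.2)})).

Definition mean_fun (th : R -> R -> R) : Prop :=
  (({within [set p : R * R | 0 <= p.1 /\ 0 <= p.2],
         continuous (fun p : R * R => th p.1 p.2)}) /\ (
      (forall s t s' t' l, 0 <= s -> 0 <= t -> 0 <= s' -> 0 <= t' -> 0 <= l <= 1 ->
         l * th s t + (1 - l) * th s' t' <= th (l * s + (1 - l) * s') (l * t + (1 - l) * t'))) /\ (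
      (forall l s t, 0 <= l -> 0 <= s -> 0 <= t -> th (l * s) (l * t) = l * th s t)) /\ (
      (forall s t, 0 <= s -> 0 <= t -> th s t = th t s)) /\ (smooth_on_pos th) /\ ((forall s, 0 <= s -> th 0 s = 0 /\ th s 0 = 0)) /\ ((forall s, 0 <= s -> th s s = s)) /\ ((forall s t, 0 < s -> 0 < t -> 0 < th s t)) /\ ((forall s t, 0 <= s -> 0 <= t -> 0 <= th s t)) /\ (
      (forall s s' t, 0 <= s -> s <= s' -> 0 <= t ->
         th s t <= th s' t /\ th t s <= th t s'))).

(* alpha, with the convention theta = -oo when an argument is negative *)
Definition alpha (th : R -> R -> R) (s t m : R) : \bar R :=
  if (0 <= s) && (0 <= t) then
    if 0 < th s t then ((m ^+ 2) / th s t)%:E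
    else if m == 0 then 0%E else +oo%E
  else +oo%E.

Definition action (Q : X -> X -> R) (pi : X -> R) (th : R -> R -> R)
    (rho : R -> X -> R) (m : R -> X -> X -> R) : \bar R :=
  ((2^-1)%:E * integral (@lebesgue_measure R) I01
     (fun t => \sum_x \sum_y
        (alpha th (rho t x) (rho t y) (m t x y) * (Q x y * pi x)%:E)%E))%E.

(* test functions C^1([0,1], R^X), represented by C^1 functions on R *)
Definition test_fun (phi : R -> X -> R) : Prop :=
  forall x, (forall t, derivable (fun s => phi s x) t 1) /\
            continuous (fun t => derive1 (fun s => phi s x) t).

(* CE(rhoA, rhoB): measurable (and integrable, so that the weak form makes
   sense) pairs satisfying the weak continuity equation. *)
Definition CE (Q : X -> X -> R) (pi : X -> R) (rhoA rhoB : X -> R)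
    (rho : R -> X -> R) (m : R -> X -> X -> R) : Prop :=
  (((forall x, measurable_fun I01 (fun t : R => rho t x))) /\ ((forall x y, measurable_fun I01 (fun t : R => m t x y))) /\ ((forall x, (@lebesgue_measure R).-integrable I01 (fun t : R => (rho t x)%:E))) /\ ((forall x y, (@lebesgue_measure R).-integrable I01 (fun t : R => (m t x y)%:E))) /\ (forall phi, test_fun phi ->
        Rintegral (@lebesgue_measure R) I01
          (fun t => ip_pi pi (fun x => derive1 (fun s => phi s x) t) (rho t)
                    + ip_Q Q pi (gradX (phi t)) (m t))
        = ip_pi pi (phi 1) rhoB - ip_pi pi (phi 0) rhoA)).

Definition hstep (N : nat) : R := N%:R^-1.
Definition tgrid (N i : nat) : R := i%:R / N%:R.
Definition in_cell (N i : nat) (t : R) : bool := tgrid N i <= t < tgrid N i.+1.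
(* index i of the cell I_i containing t (t = 1 is put in the last cell) *)
Definition cell (N : nat) (t : R) : nat := minn (Num.truncn (N%:R * t)) N.-1.

Definition V1n (N : nat) (f : R -> X -> R) : Prop :=
  (forall x, {within I01, continuous (fun t => f t x)}) /\
  forall i, (i < N)%N -> exists a b : X -> R,
    forall t, in_cell N i t -> forall x, f t x = a x + b x * t.
Definition V0e (N : nat) (f : R -> X -> X -> R) : Prop :=
  forall i, (i < N)%N -> forall s t, in_cell N i s -> in_cell N i t -> f s = f t.

Definition CEh (Q : X -> X -> R) (N : nat) (rhoA rhoB : X -> R)
    (rh : R -> X -> R) (mh : R -> X -> X -> R) : Prop :=
  ((V1n N rh) /\ (V0e N mh) /\ (rh (tgrid N 0) = rhoA) /\ (rh (tgrid N N) = rhoB) /\ (forall i, (i < N)%N -> forall x, (rh (tgrid N i.+1) x - rh (tgrid N i) x) / hstep N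
        + divX Q (mh (tgrid N i)) x = 0)).

Definition avg (N : nat) (f : R -> R) : R -> R := fun t =>
  Rintegral (@lebesgue_measure R) `[tgrid N (cell N t), tgrid N (cell N t).+1[ f
  / hstep N.
Definition avg_n (N : nat) (f : R -> X -> R) : R -> X -> R :=
  fun t x => avg N (fun s => f s x) t.
Definition avg_e (N : nat) (f : R -> X -> X -> R) : R -> X -> X -> R :=
  fun t x y => avg N (fun s => f s x y) t.

Definition interp (N : nat) (rho : R -> X -> R) : R -> X -> R := fun t x =>
  rho (tgrid N (cell N t)) x
  + (t - tgrid N (cell N t)) / hstep N
    * (rho (tgrid N (cell N t).+1) x - rho (tgrid N (cell N t)) x).

Definition action_h (Q : X -> X -> R) (pi : X -> R) (th : R -> R -> R) (N : nat)
    (rh : R -> X -> R) (mh : R -> X -> X -> R) : \bar R :=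
  action Q pi th (avg_n N rh) (avg_e N mh).

End Defs.

(* Main.v *)
Require Import Defs.
From HB Require Import structures.
From mathcomp Require Import all_boot all_order all_algebra.
From mathcomp Require Import all_classical all_reals all_analysis.
From mathcomp Require Import ring lra zify measurable_realfun.
Import Order.TTheory GRing.Theory Num.Theory.
Import numFieldNormedType.Exports.
Local Open Scope classical_set_scope.
Local Open Scope ring_scope.

Module Helpers.
Set Implicit Arguments. Unset Strict Implicit. Unset Printing Implicit Defensive.

Section S.
Variable (R : realFieldType) (X : finType) (Q : X -> X -> R) (pi : X -> R).
Hypothesis Q0 : forall x y, 0 <= Q x y.
Hypothesis Qc : forall x y, connect [rel a b | 0 < Q a b] x y.
Hypothesis pi0 : forall x, 0 < pi x.
Hypothesis rev : forall x y, pi x * Q x y = pi y * Q y x.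

Definition Lg (psi : X -> R) x := \sum_y Q x y * (psi x - psi y).

Lemma energy psi : 2 * \sum_x pi x * psi x * Lg psi x =
   \sum_x \sum_y pi x * Q x y * (psi x - psi y)^+2.
Proof.
have E : \sum_x pi x * psi x * Lg psi x = \sum_x \sum_y pi x * Q x y * (psi y * (psi y - psi x)).
  symmetry; rewrite exchange_big /=; apply: eq_bigr => x _.
  rewrite /Lg mulr_sumr; apply: eq_bigr => y _.
  rewrite rev; ring.
rewrite mulr2n mulrDl mul1r {2}E -big_split /=; apply: eq_bigr => x _.
rewrite /Lg mulr_sumr -big_split /=; apply: eq_bigr => y _; ring.
Qed.

Lemma Lg0_const psi : (forall x, Lg psi x = 0) -> forall x y, psi x = psi y.
Proof.
move=> L0.
have S0 : \sum_x \sum_y pi x * Q x y * (psi x - psi y)^+2 = 0.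
  rewrite -energy big1 ?mulr0 // => x _; by rewrite L0 mulr0.
have T0 : forall x y, pi x * Q x y * (psi x - psi y)^+2 = 0.
  move=> x y.
  have ge0 : forall x y, 0 <= pi x * Q x y * (psi x - psi y)^+2.
    move=> a b; apply: mulr_ge0; [apply: mulr_ge0 => //; exact: ltW | exact: sqr_ge0].
  move/eqP: S0; rewrite psumr_eq0 => [/allP H|]; last first.
    by move=> a _; apply: sumr_ge0 => b _; apply: ge0.
  have := H x (mem_index_enum x); rewrite psumr_eq0 => [/allP H2|]; last by move=> b _; apply: ge0.
  by apply/eqP; apply: H2; exact: mem_index_enum.
have edge : forall x y, 0 < Q x y -> psi x = psi y.
  move=> x y Qxy; have h := T0 x y.
  have hpq : 0 < pi x * Q x y by apply: mulr_gt0.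
  move/eqP: h; rewrite mulf_eq0 (gt_eqF hpq) /= => /eqP h2.
  apply/eqP; rewrite -subr_eq0; apply/eqP.
  by move: h2; rewrite expr2 => /eqP; rewrite mulf_eq0 orbb => /eqP.
move=> x y; have /connectP [p pth ->] := Qc x y.
elim: p x pth => [|z p IH] x //= /andP [exz pth].
by rewrite (edge _ _ exz) IH.
Qed.

Lemma Lg_mean psi : \sum_x pi x * Lg psi x = 0.
Proof.
have E : \sum_x pi x * Lg psi x = \sum_x \sum_y pi x * Q x y * (psi x - psi y).
  by apply: eq_bigr => x _; rewrite /Lg mulr_sumr; apply: eq_bigr => y _; ring.
have E2 : \sum_x pi x * Lg psi x = - \sum_x pi x * Lg psi x.
  rewrite {1}E exchange_big /= E -sumrN; apply: eq_bigr => x _.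
  rewrite -sumrN; apply: eq_bigr => y _; rewrite rev; ring.
by apply/eqP; rewrite -[_ == 0](@mulrn_eq0 _ _ 2) mulr2n {1}E2 addNr.
Qed.

End S.

Section M.
Variable (R : realFieldType) (X : finType) (Q : X -> X -> R) (pi : X -> R).
Hypothesis Q0 : forall x y, 0 <= Q x y.
Hypothesis Qc : forall x y, connect [rel a b | 0 < Q a b] x y.
Hypothesis pi0 : forall x, 0 < pi x.
Hypothesis rev : forall x y, pi x * Q x y = pi y * Q y x.

Local Notation n := #|X|.
Local Notation idx := (@enum_val X predT).

Lemma sum_idx (F : X -> R) : \sum_(i < n) F (idx i) = \sum_x F x.
Proof. by rewrite (big_enum_val F). Qed.

Definition Amx : 'M[R]_n :=
  \matrix_(i, j) ((i == j)%:R * \sum_y Q (idx j) y - Q (idx j) (idx i)).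

Lemma Amx_row (psi : X -> R) j :
  ((\row_i psi (idx i)) *m Amx) 0 j = Lg Q psi (idx j).
Proof.
rewrite !mxE /Lg.
under eq_bigr do rewrite !mxE mulrBr.
rewrite sumrB [X in X - _](bigD1 j) //= eqxx mul1r [X in _ + X - _]big1; last first.
  by move=> i /negbTE ->; rewrite mul0r mulr0.
rewrite addr0 (sum_idx (fun y => psi y * Q (idx j) y)).
rewrite mulr_sumr -sumrB; apply: eq_bigr => y _; ring.
Qed.

Lemma poisson_mx : exists B : R, 0 <= B /\ forall f : X -> R, \sum_x pi x * f x = 0 ->
  exists psi : X -> R, (forall x, Lg Q psi x = f x) /\
     (forall x, `|psi x| <= B * \sum_z `|f z|).
Proof.
case: (pickP (@predT X)) => [x0 _|none]; last first.
  exists 0; split => // f _; exists (fun _ => 0); split => x; by have := none x.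
set i0 := enum_rank x0.
set c : 'rV[R]_n := const_mx 1.
have kerA : (kermx Amx <= c)%MS.
  apply/row_subP => k; set r := row k (kermx Amx).
  have rA : r *m Amx = 0 by apply/eqP; rewrite -sub_kermx row_sub.
  clearbody r.
  pose psi := fun x => r 0 (enum_rank x).
  have rE : r = \row_i psi (idx i) by apply/rowP => i; rewrite !mxE /psi enum_valK.
  have L0 : forall x, Lg Q psi x = 0.
    move=> x; rewrite -(enum_rankK x) -Amx_row -rE rA mxE //.
  have cst := Lg0_const Q0 Qc pi0 rev L0.
  have -> : r = r 0 i0 *: c.
    apply/rowP => j; rewrite !mxE mulr1.
    have := cst (idx j) x0; rewrite /psi enum_valK => ->; done.
  exact: scalemx_sub.
have rkA : (n - 1 <= \rank Amx)%N.
  have H := (mxrank_leqif_sup kerA).1.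
  rewrite mxrank_ker in H.
  have : (\rank c <= 1)%N by apply: rank_leq_row.
  move: H (rank_leq_col Amx); lia.
set p : 'cV[R]_n := \col_i pi (idx i).
have Ap : (Amx <= kermx p)%MS.
  rewrite sub_kermx; apply/eqP/matrixP => i k; rewrite !mxE.
  under eq_bigr do rewrite !mxE mulrBl.
  rewrite sumrB [X in X - _](bigD1 i) //= eqxx mul1r [X in _ + X - _]big1; last first.
    by move=> j; rewrite eq_sym => /negbTE ->; rewrite !mul0r.
  rewrite addr0 (sum_idx (fun y => Q y (idx i) * pi y)) mulr_suml -sumrB big1 // => y _.
  by rewrite mulrC rev mulrC subrr.
have rkp : (\rank (kermx p) <= n - 1)%N.
  rewrite mxrank_ker.
  have : p != 0.
    apply/eqP => /matrixP /(_ i0 0); rewrite !mxE => /eqP; by rewrite (gt_eqF (pi0 _)).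
  rewrite -mxrank_eq0; lia.
have pA : (kermx p <= Amx)%MS.
  have [_ <-] := mxrank_leqif_sup Ap.
  have H := (mxrank_leqif_sup Ap).1.
  apply/eqP; lia.
set P := pinvmx Amx.
exists (\sum_i \sum_k `|P i k|); split.
  by apply: sumr_ge0 => i _; apply: sumr_ge0 => k _.
move=> f fm.
set u : 'rV[R]_n := \row_i f (idx i).
have uA : (u <= Amx)%MS.
  apply: submx_trans pA; rewrite sub_kermx; apply/eqP/matrixP => i k.
  rewrite !mxE -[RHS]fm -(sum_idx (fun y => pi y * f y)).
  by apply: eq_bigr => i1 _; rewrite !mxE mulrC.
have uPA : u *m P *m Amx = u by exact: mulmxKpV.
clearbody P.
pose psi := fun x => (u *m P) 0 (enum_rank x).
exists psi; split.
  move=> x; rewrite -(enum_rankK x) -Amx_row.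
  have -> : \row_i psi (idx i) = u *m P by apply/rowP => i; rewrite [LHS]mxE /psi enum_valK.
  by rewrite uPA mxE.
move=> x; rewrite /psi mxE.
apply: le_trans (ler_norm_sum _ _ _) _.
rewrite -(sum_idx (fun z => `|f z|)) mulr_sumr; apply: ler_sum => i _.
rewrite normrM mulrC !mxE; apply: ler_wpM2r => //.
rewrite (bigD1 i) //= (bigD1 (enum_rank x)) //= -addrA; apply: ler_wpDr => //.
apply: addr_ge0; first by apply: sumr_ge0.
by apply: sumr_ge0 => j _; apply: sumr_ge0.
Qed.
End M.

Section A.
Context {R : realType}.

Lemma is_derive_bsum (I : Type) (s : seq I) (h : I -> R -> R) (dh : I -> R) (t : R) :
  (forall i, is_derive t 1 (h i) (dh i)) ->
  is_derive t 1 (fun u => \sum_(i <- s) h i u) (\sum_(i <- s) dh i).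
Proof.
move=> H; elim: s => [|a s IH].
  have -> : (fun u => \sum_(i <- [::]) h i u) = cst 0 by apply: funext => u; rewrite big_nil.
  rewrite big_nil; exact: is_derive_cst.
have -> : (fun u => \sum_(i <- a :: s) h i u) = h a + (fun u => \sum_(i <- s) h i u).
  by apply: funext => u; rewrite big_cons.
rewrite big_cons; exact: is_deriveD.
Qed.

Lemma continuous_bsum (I : Type) (s : seq I) (h : I -> R -> R) :
  (forall i, continuous (h i)) -> continuous (fun u => \sum_(i <- s) h i u).
Proof.
move=> H; elim: s => [|a s IH].
  have -> : (fun u => \sum_(i <- [::]) h i u) = cst 0 by apply: funext => u; rewrite big_nil.
  exact: cst_continuous.
have -> : (fun u => \sum_(i <- a :: s) h i u) = h a + (fun u => \sum_(i <- s) h i u).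
  by apply: funext => u; rewrite big_cons.
by move=> x; apply: continuousD; [exact: H | exact: IH].
Qed.

Lemma FTC_simple (F f : R -> R) (a b : R) : a < b ->
  (forall t : R, is_derive t (1:R) F (f t)) -> continuous f ->
  Rintegral (@lebesgue_measure R) `[a, b] f = F b - F a.
Proof.
move=> ab dF cf.
have cF : continuous F.
  move=> t; apply: differentiable_continuous; apply/derivable1_diffP.
  by have := dF t => -[].
rewrite /Rintegral (@continuous_FTC2 R f F a b ab) //.
- exact: continuous_subspaceT.
- split.
  + by move=> t _; have := dF t => -[].
  + by apply: cvg_at_right_filter; exact: cF.
  + by apply: cvg_at_left_filter; exact: cF.
- by move=> t _; rewrite derive1E; apply: derive_val.
Qed.

Lemma le_integral_nomeas (D : set R) (f g : R -> \bar R) :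
  (forall x, D x -> (0 <= f x)%E) -> (forall x, D x -> (f x <= g x)%E) ->
  (\int[@lebesgue_measure R]_(x in D) f x <= \int[@lebesgue_measure R]_(x in D) g x)%E.
Proof.
move=> f0 fg.
have g0 : forall x, D x -> (0 <= g x)%E by move=> x Dx; exact: le_trans (f0 x Dx) (fg x Dx).
rewrite !ge0_integralE //; apply: le_ereal_sup => _ [h /= hf <-]; exists h => //= x.
apply: le_trans (hf x) _; rewrite /patch; case: ifP => // /set_mem Dx; exact: fg.
Qed.


Lemma is_derive_poly2 (a b c t : R) :
  is_derive t (1:R) (fun s => a + b * s + c * s * s) (b + 2 * c * t).
Proof.
have H := is_deriveD (is_deriveD (is_derive_cst a t (1:R)) (is_deriveZ b (is_derive_id t (1:R))))
   (is_deriveZ c (is_deriveM (is_derive_id t (1:R)) (is_derive_id t (1:R)))).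
have -> : (fun s => a + b * s + c * s * s) = (cst a + b \*: id + c \*: (id * id)).
  by apply: funext => s; rewrite !fctE /= /GRing.scale /= mulrA.
apply: is_derive_eq H _; rewrite /GRing.scale /=. ring.
Qed.

Lemma continuous_poly2 (a b c : R) : continuous (fun s : R => a + b * s + c * s * s).
Proof.
move=> t; apply: differentiable_continuous; apply/derivable1_diffP.
by have [] := is_derive_poly2 a b c t.
Qed.

Lemma Rint_affine (a b p q : R) (g : R -> R) : a < b ->
  (forall s, a <= s < b -> g s = p + q * s) ->
  Rintegral (@lebesgue_measure R) `[a, b[ g = (b - a) * p + q * (b ^+ 2 - a ^+ 2) / 2.
Proof.
move=> ab gE.
have -> : Rintegral (@lebesgue_measure R) `[a, b[ g =
   Rintegral (@lebesgue_measure R) `[a, b[ (fun s => p + q * s + 0 * s * s).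
  apply: eq_Rintegral => s; rewrite inE /= in_itv /= => hs; rewrite gE //; ring.
rewrite Rintegral_itv_bndo_bndc; last first.
  apply: (@integrableS _ _ _ lebesgue_measure `[a, b] `[a, b[) => //.
    by apply: subset_itv; rewrite bnd_simp.
  apply: continuous_compact_integrable; first exact: segment_compact.
  apply: continuous_subspaceT; exact: continuous_poly2.
assert (dF : forall t : R, is_derive t (1:R) (fun s => 0 + p * s + (q / 2) * s * s) (p + q * t + 0 * t * t)).
  by move=> t; apply: is_derive_eq (is_derive_poly2 0 p (q / 2) t) _; field.
have := FTC_simple ab dF (@continuous_poly2 p q 0).
by rewrite /= => ->; field.
Qed.

End A.

Section G.
Context {R : realType}.
Variable (N : nat).
Hypothesis NP : (0 < N)%N.

Lemma Nr_gt0 : 0 < N%:R :> R.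
Proof. by rewrite ltr0n. Qed.
Lemma Nr_neq0 : N%:R != 0 :> R.
Proof. by rewrite pnatr_eq0 -lt0n. Qed.

Lemma tgridS i : tgrid N i.+1 - tgrid N i = hstep N :> R.
Proof. rewrite /tgrid /hstep -mulrBl -natrB // subSnn; by rewrite mul1r. Qed.

Lemma tgrid_ge0 i : 0 <= tgrid N i :> R.
Proof. rewrite /tgrid; apply: divr_ge0 => //. Qed.

Lemma tgrid_le1 i : (i <= N)%N -> tgrid N i <= 1 :> R.
Proof. move=> iN; rewrite /tgrid ler_pdivrMr ?Nr_gt0 // mul1r ler_nat //. Qed.

Lemma tgridN : tgrid N N = 1 :> R.
Proof. by rewrite /tgrid divff // Nr_neq0. Qed.

Lemma tgrid0 : tgrid N 0 = 0 :> R.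
Proof. by rewrite /tgrid mul0r. Qed.

Lemma hstep_gt0 : 0 < hstep N :> R.
Proof. by rewrite /hstep invr_gt0 Nr_gt0. Qed.

Lemma cell_lt (t : R) : (cell N t < N)%N.
Proof. rewrite /cell; apply: leq_ltn_trans (geq_minr _ _) _; lia. Qed.

Lemma cell_in (c : nat) (t : R) : (c < N)%N -> tgrid N c <= t < tgrid N c.+1 -> cell N t = c.
Proof.
move=> cN /andP[h1 h2]; rewrite /cell.
have -> : Num.truncn (N%:R * t) = c.
  apply: truncn_def; apply/andP; split.
    by move: h1; rewrite /tgrid ler_pdivrMr ?Nr_gt0 // mulrC.
  by move: h2; rewrite /tgrid ltr_pdivlMr ?Nr_gt0 // mulrC.
lia.
Qed.

Lemma cell_grid j : (j < N)%N -> cell N (tgrid N j : R) = j.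
Proof.
move=> jN; apply: cell_in => //; rewrite lexx /=.
by rewrite /tgrid ltr_pM2r ?invr_gt0 ?Nr_gt0 // ltr_nat.
Qed.

Lemma cell_N : cell N (tgrid N N : R) = N.-1.
Proof. by rewrite /cell tgridN mulr1 natrK; lia. Qed.

Lemma cell_bounds (t : R) : 0 <= t <= 1 ->
  tgrid N (cell N t) <= t <= tgrid N (cell N t).+1.
Proof.
move=> /andP[t0 t1]; rewrite /cell.
have := truncn_itv (mulr_ge0 (ler0n _ N) t0) => /andP[l1 l2].
have := geq_minl (Num.truncn (N%:R * t)) N.-1.
have := geq_minr (Num.truncn (N%:R * t)) N.-1.
set c := minn _ _ => cle1 cle2.
apply/andP; split.
  rewrite /tgrid ler_pdivrMr ?Nr_gt0 // mulrC; apply: le_trans l1; by rewrite ler_nat.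
rewrite /tgrid ler_pdivlMr ?Nr_gt0 // mulrC.
have [hc|hc] := leqP (Num.truncn (N%:R * t)) N.-1.
  have -> : c = Num.truncn (N%:R * t) by rewrite /c; lia.
  exact: ltW.
have -> : c = N.-1 by rewrite /c; lia.
rewrite prednK //; apply: le_trans (_ : N%:R * 1 <= _); first by rewrite ler_pM2l ?Nr_gt0.
by rewrite mulr1.
Qed.

End G.

Section Alpha.
Context {R : realType}.
Variable th : R -> R -> R.
Hypothesis th_mono : forall s s' t, 0 <= s -> s <= s' -> 0 <= t ->
         th s t <= th s' t /\ th t s <= th t s'.
Hypothesis th_diag : forall s, 0 <= s -> th s s = s.

Lemma alpha_ge0 a b m : (0 <= alpha th a b m)%E.
Proof.
rewrite /alpha; case: ifP => // _; case: ifP => [h|_].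
  by rewrite lee_fin divr_ge0 // ?sqr_ge0 // ltW.
by case: ifP.
Qed.

Lemma alpha_m0 a b : 0 <= a -> 0 <= b -> alpha th a b 0 = 0%E.
Proof.
move=> a0 b0; rewrite /alpha a0 b0 /=; case: ifP => _; last by rewrite eqxx.
by rewrite expr0n /= mul0r.
Qed.

Lemma alpha_le a b m s : 0 < s -> s <= a -> s <= b ->
  (alpha th a b m <= (m ^+ 2 / s)%:E)%E.
Proof.
move=> s0 sa sb.
have a0 : 0 <= a by apply: le_trans sa; exact: ltW.
have b0 : 0 <= b by apply: le_trans sb; exact: ltW.
have h1 : s <= th a b.
  have [h2 _] := th_mono (ltW s0) sa b0.
  have [_ h3] := th_mono (ltW s0) sb (ltW s0).
  rewrite -{1}(th_diag (ltW s0)); apply: le_trans h3 h2; done.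
have tpos : 0 < th a b by apply: lt_le_trans h1.
rewrite /alpha a0 b0 /= tpos lee_fin.
apply: ler_wpM2l; first exact: sqr_ge0.
by rewrite lef_pV2 ?posrE.
Qed.
End Alpha.

Section Div.
Context {R : realType} {X : finType}.
Variables (Q : X -> X -> R) (pi : X -> R).
Hypothesis rev : forall x y, pi x * Q x y = pi y * Q y x.

Lemma ipQ_div (g : X -> R) (F : X -> X -> R) :
  ip_Q Q pi (gradX g) F = - \sum_x g x * pi x * divX Q F x.
Proof.
rewrite /ip_Q /divX /gradX.
have E : \sum_x g x * pi x * (2^-1 * \sum_y Q x y * (F y x - F x y)) =
  2^-1 * (\sum_x \sum_y g x * F y x * Q x y * pi x - \sum_x \sum_y g x * F x y * Q x y * pi x).
  rewrite -sumrB mulr_sumr; apply: eq_bigr => x _.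
  rewrite -sumrB !mulr_sumr; apply: eq_bigr => y _; ring.
rewrite E; have -> : \sum_x \sum_y g x * F y x * Q x y * pi x = \sum_x \sum_y g y * F x y * Q x y * pi x.
  rewrite exchange_big /=; apply: eq_bigr => x _; apply: eq_bigr => y _.
  by rewrite -!mulrA [Q y x * _]mulrC -rev; ring.
rewrite -mulrN opprB -sumrB; congr (_ * _); apply: eq_bigr => x _.
rewrite -sumrB; apply: eq_bigr => y _; ring.
Qed.
End Div.

Section C.
Context {R : realType}.
Lemma cM (f g : R -> R) : continuous f -> continuous g -> continuous (fun u => f u * g u).
Proof. by move=> cf cg x; apply: continuousM; [exact: cf | exact: cg]. Qed.
Lemma cD (f g : R -> R) : continuous f -> continuous g -> continuous (fun u => f u + g u).
Proof. by move=> cf cg x; apply: continuousD; [exact: cf | exact: cg]. Qed.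
Lemma cB (f g : R -> R) : continuous f -> continuous g -> continuous (fun u => f u - g u).
Proof. by move=> cf cg x; apply: continuousB; [exact: cf | exact: cg]. Qed.
Lemma cN (f : R -> R) : continuous f -> continuous (fun u => - f u).
Proof. by move=> cf x; apply: continuousN; exact: cf. Qed.
Lemma cC (c : R) : continuous (fun _ : R => c).
Proof. exact: cst_continuous. Qed.
Lemma cI : continuous (fun u : R => u).
Proof. by move=> x; exact: cvg_id. Qed.
End C.

Ltac cont := repeat first [ exact: cC | exact: cI | apply: continuous_bsum => ? | apply: cM | apply: cD | apply: cB | apply: cN ].

Section W.
Context {R : realType} {X : finType}.
Variables (Q : X -> X -> R) (pi : X -> R).
Hypothesis rev : forall x y, pi x * Q x y = pi y * Q y x.
Variables (rhoA f : X -> R) (M : X -> X -> R).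
Hypothesis divM : forall x, divX Q M x = f x.
Hypothesis fE : forall x, f x = rhoA x - 1.

Definition rhoT (t : R) (x : X) := rhoA x - t * t * f x.
Definition mT (t : R) (x y : X) := 2 * t * M x y.

Lemma divX_scale (c : R) (F : X -> X -> R) x : divX Q (fun a b => c * F a b) x = c * divX Q F x.
Proof. rewrite /divX !mulr_sumr; apply: eq_bigr => y _; ring. Qed.

Lemma weak_form phi : test_fun phi ->
  Rintegral (@lebesgue_measure R) I01
    (fun t => ip_pi pi (fun x => derive1 (fun s => phi s x) t) (rhoT t)
              + ip_Q Q pi (gradX (phi t)) (mT t))
  = ip_pi pi (phi 1) (fun _ => 1) - ip_pi pi (phi 0) rhoA.
Proof.
move=> tf.
have cphi : forall x, continuous (fun u => phi u x).
  move=> x t; apply: differentiable_continuous; apply/derivable1_diffP; exact: (tf x).1.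
have cdphi : forall x, continuous (fun u => derive1 (fun s => phi s x) u) by move=> x; exact: (tf x).2.
pose H := fun t => \sum_x phi t x * rhoT t x * pi x.
set G := fun t => _ + _.
have GE : forall t, G t = \sum_x (derive1 (fun s => phi s x) t * rhoT t x + phi t x * (- 2 * t * f x)) * pi x.
  move=> t; rewrite /G ipQ_div //.
  have -> : divX Q (mT t) = fun x => 2 * t * f x.
    by apply: funext => x; rewrite /mT divX_scale divM.
  rewrite /ip_pi -sumrN -big_split /=; apply: eq_bigr => x _; ring.
have dH : forall t : R, is_derive t (1:R) H (G t).
  move=> t; rewrite GE; apply: is_derive_bsum => x.
  have dphi : is_derive t (1:R) (fun u => phi u x) (derive1 (fun s => phi s x) t).
    rewrite derive1E; apply: derivableP; exact: ((tf x).1 t).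
  have drho : is_derive t (1:R) (fun u => rhoT u x) (- 2 * t * f x).
    have -> : (fun u => rhoT u x) = (fun u => rhoA x + 0 * u + (- f x) * u * u).
      by apply: funext => u; rewrite /rhoT; ring.
    apply: is_derive_eq (is_derive_poly2 _ _ _ _) _; ring.
  have := is_deriveM (is_deriveM dphi drho) (is_derive_cst (pi x) t (1:R)).
  have -> : (fun u => phi u x) * (fun u => rhoT u x) * cst (pi x) = (fun u => phi u x * rhoT u x * pi x).
    by apply: funext => u; rewrite !fctE.
  move=> h; apply: is_derive_eq h _; rewrite /GRing.scale /= /cst; ring.
have cG : continuous G.
  rewrite /G /ip_pi /ip_Q /gradX /mT /rhoT /=; cont. all: try (by apply: cphi). all: try (by apply: cdphi).
rewrite (FTC_simple ltr01 dH cG) /H /ip_pi /rhoT; congr (_ - _); by apply: eq_bigr => x _; rewrite ?fE; ring.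
Qed.
End W.

Section AB.
Context {R : realType} {X : finType}.
Variables (Q : X -> X -> R) (pi : X -> R) (th : R -> R -> R).
Hypothesis Q0 : forall x y, 0 <= Q x y.
Hypothesis pi0 : forall x, 0 < pi x.

Definition SS := \sum_x \sum_y Q x y * pi x.

Lemma QP0 x y : 0 <= Q x y * pi x.
Proof. by apply: mulr_ge0 => //; exact: ltW. Qed.

Lemma esum_bound (A : X -> X -> \bar R) (K : R) :
  (forall x y, 0 <= A x y)%E -> (forall x y, A x y <= K%:E)%E ->
  (\sum_x \sum_y (A x y * (Q x y * pi x)%:E) <= (K * SS)%:E)%E.
Proof.
move=> A0 AK.
apply: (@le_trans _ _ (\sum_x \sum_y (K * (Q x y * pi x))%:E)%E).
  apply: lee_sum => x _; apply: lee_sum => y _.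
  have h : (0 <= (Q x y * pi x)%:E)%E by rewrite lee_fin; exact: QP0.
  by rewrite [in X in (_ <= X)%E]EFinM; exact: (lee_wpmul2r h (AK x y)).
rewrite /SS mulr_sumr -sumEFin; apply: lee_sum => x _.
by rewrite mulr_sumr -sumEFin.
Qed.

Lemma action_bound rho m (K : R) : 0 <= K ->
  (forall t, 0 <= t <= 1 -> forall x y, (alpha th (rho t x) (rho t y) (m t x y) <= K%:E)%E) ->
  (action Q pi th rho m <= (2^-1 * (K * SS))%:E)%E.
Proof.
move=> K0 HK.
have SS0 : 0 <= SS by apply: sumr_ge0 => x _; apply: sumr_ge0 => y _; exact: QP0.
rewrite /action EFinM; apply: lee_wpmul2l; first by rewrite lee_fin invr_ge0.
apply: (@le_trans _ _ (\int[@lebesgue_measure R]_(t in I01) (K * SS)%:E)%E).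
  apply: le_integral_nomeas.
    move=> t _; apply: sume_ge0 => x _; apply: sume_ge0 => y _.
    by apply: mule_ge0; [exact: alpha_ge0 | rewrite lee_fin; exact: QP0].
  move=> t It; apply: esum_bound.
    by move=> x y; exact: alpha_ge0.
  move=> x y; apply: HK; move: It; by rewrite /I01 /= in_itv /=.
rewrite integral_cst /I01; last exact: measurable_itv.
have h : lebesgue_measure (`[0%R, 1%R] : set R) = 1%E.
  by rewrite lebesgue_measure_itv /= lte01 oppr0 adde0.
rewrite -[X in (_ * X)%E]/(lebesgue_measure (`[0%R, 1%R] : set R)) h.
by rewrite mule1.
Qed.
End AB.

Section D.
Context {R : realType} {X : finType}.
Variable (N : nat).
Hypothesis NP : (0 < N)%N.

Lemma tgrid_le i j : (i <= j)%N -> tgrid N i <= tgrid N j :> R.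
Proof. by move=> ij; rewrite /tgrid ler_pM2r ?invr_gt0 ?Nr_gt0 // ler_nat. Qed.

Lemma tgridSE i : tgrid N i.+1 = tgrid N i + hstep N :> R.
Proof. by rewrite -(tgridS N i) addrC subrK. Qed.

Lemma interp_grid (rho : R -> X -> R) j : (j <= N)%N ->
  interp N rho (tgrid N j) = rho (tgrid N j).
Proof.
move=> jN; apply: funext => x; rewrite /interp.
have [jlt|jeq] := ltnP j N.
  by rewrite cell_grid // subrr mul0r mul0r addr0.
have -> : j = N by lia.
rewrite cell_N //.
have h0 : hstep N != 0 :> R by rewrite gt_eqF // hstep_gt0.
move: (prednK NP); set k := N.-1 => kE.
have e : tgrid N N = tgrid N k + hstep N :> R by rewrite -{2}kE tgridSE.
rewrite kE.
have -> : (tgrid N N - tgrid N k) / hstep N = 1 :> R by rewrite e addrAC subrr add0r divff.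
by rewrite mul1r addrC subrK.
Qed.

Lemma avg_interp (rho : R -> X -> R) t x :
  avg_n N (interp N rho) t x =
  (rho (tgrid N (cell N t)) x + rho (tgrid N (cell N t).+1) x) / 2.
Proof.
rewrite /avg_n /avg; set c := cell N t.
have cN : (c < N)%N by exact: (cell_lt NP t).
have h0 : hstep N != 0 :> R by rewrite gt_eqF // hstep_gt0.
set a := tgrid N c; set b := tgrid N c.+1.
have bE : b = a + hstep N by rewrite /b tgridSE.
set D := rho b x - rho a x.
rewrite (@Rint_affine _ a b (rho a x - a * D / hstep N) (D / hstep N)).
- have rb : rho b x = D + rho a x by rewrite /D subrK.
  rewrite rb bE; field => //.
- by rewrite bE ltrDl hstep_gt0.
- move=> s hs; rewrite /interp (cell_in NP cN hs) -/a -/b -/D; field => //.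
Qed.

Lemma avg_m (M : X -> X -> R) t x y :
  avg_e N (mT M) t x y = (tgrid N (cell N t) + tgrid N (cell N t).+1) * M x y.
Proof.
rewrite /avg_e /avg /mT; set c := cell N t.
have cN : (c < N)%N by exact: (cell_lt NP t).
have h0 : hstep N != 0 :> R by rewrite gt_eqF // hstep_gt0.
set a := tgrid N c; set b := tgrid N c.+1.
have bE : b = a + hstep N by rewrite /b tgridSE.
rewrite (@Rint_affine _ a b 0 (2 * M x y)).
- rewrite bE; field => //.
- by rewrite bE ltrDl hstep_gt0.
- move=> s hs; ring.
Qed.

Lemma avg_avg (m : R -> X -> X -> R) t x y :
  avg_e N (avg_e N m) t x y = avg_e N m t x y.
Proof.
have h0 : hstep N != 0 :> R by rewrite gt_eqF // hstep_gt0.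
rewrite {1}/avg_e {1}/avg; set c := cell N t.
have cN : (c < N)%N by exact: (cell_lt NP t).
rewrite (@Rint_affine _ (tgrid N c) (tgrid N c.+1) (avg_e N m t x y) 0).
- rewrite tgridSE; field => //.
- by rewrite tgridSE ltrDl hstep_gt0.
- move=> s hs; rewrite mul0r addr0 /avg_e /avg (cell_in NP cN hs) //.
Qed.

End D.

Section E.
Context {R : realType} {X : finType}.
Variable (N : nat).
Hypothesis NP : (0 < N)%N.

Definition chord (j : nat) (t : R) := t * (tgrid N j + tgrid N j.+1) - tgrid N j * tgrid N j.+1.

Lemma interp_rhoT (rhoA f : X -> R) t x :
  interp N (rhoT rhoA f) t x = rhoA x - f x * chord (cell N t) t.
Proof.
have h0 : hstep N != 0 :> R by rewrite gt_eqF // hstep_gt0.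
rewrite /interp /rhoT /chord tgridSE; field => //.
Qed.

Lemma chord_max c j t : tgrid N c <= t <= tgrid N c.+1 -> chord j t <= chord c t.
Proof.
move=> /andP[h1 h2].
have E k : chord k t = t ^+ 2 - (t - tgrid N k) * (t - tgrid N k.+1) by rewrite /chord; ring.
rewrite !E lerD2l lerN2.
have hj : tgrid N j <= tgrid N j.+1 :> R := tgrid_le NP (leqnSn j).
have L : (t - tgrid N c) * (t - tgrid N c.+1) <= 0.
  by apply: mulr_ge0_le0; rewrite ?subr_ge0 ?subr_le0.
have [jeq|jc] := eqVneq j c; first by rewrite jeq.
apply: le_trans L _.
have [jc'|cj] := ltnP j c.
  have : tgrid N j.+1 <= tgrid N c :> R by apply: tgrid_le.
  move=> hh; apply: mulr_ge0; rewrite subr_ge0; lra.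
have : tgrid N c.+1 <= tgrid N j :> R by apply: tgrid_le; lia.
move=> hh; apply: mulr_le0; rewrite subr_le0; lra.
Qed.

Definition Gmax (t : R) := \big[Order.max/chord 0 t]_(j <- iota 0 N) chord j t.

Lemma Gmax_eq t : 0 <= t <= 1 -> Gmax t = chord (cell N t) t.
Proof.
move=> t01; have cb := cell_bounds NP t01.
have cin : cell N t \in iota 0 N by rewrite mem_iota add0n (cell_lt NP).
apply/eqP; rewrite eq_le; apply/andP; split.
  rewrite /Gmax; elim: (iota 0 N) => [|a s IH]; first by rewrite big_nil chord_max.
  by rewrite big_cons ge_max chord_max.
rewrite /Gmax; elim: (iota 0 N) cin => [//|a s IH].
rewrite inE big_cons le_max => /orP[/eqP <-|/IH ->]; first by rewrite lexx.
by rewrite orbT.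
Qed.

Lemma Gmax_cont : continuous Gmax.
Proof.
have cc : forall j, continuous (chord j).
  move=> j.
  have -> : chord j = (fun s => (- (tgrid N j * tgrid N j.+1)) + (tgrid N j + tgrid N j.+1) * s + 0 * s * s).
    by apply: funext => s; rewrite /chord; ring.
  exact: continuous_poly2.
rewrite /Gmax; elim: (iota 0 N) => [|a s IH].
  have -> : (fun t => \big[Order.max/chord 0 t]_(j <- [::]) chord j t) = chord 0.
    by apply: funext => t; rewrite big_nil.
  exact: cc.
have -> : (fun t => \big[Order.max/chord 0 t]_(j <- a :: s) chord j t) =
   (chord a) \max (fun t => \big[Order.max/chord 0 t]_(j <- s) chord j t).
  by apply: funext => t; rewrite big_cons.
by move=> t; apply: continuous_max; [exact: cc | exact: IH].
Qed.

Lemma interp_cont (rhoA f : X -> R) x :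
  {within I01, continuous (fun t => interp N (rhoT rhoA f) t x)}.
Proof.
have cf : continuous (fun t => rhoA x - f x * Gmax t).
  by apply: cB; [exact: cC | apply: cM; [exact: cC | exact: Gmax_cont]].
apply: (@subspace_eq_continuous _ I01 _ (fun t => rhoA x - f x * Gmax t)); last first.
  exact: continuous_subspaceT.
move=> t; rewrite inE /I01 /= in_itv /= => t01.
by rewrite /from_subspace /= interp_rhoT Gmax_eq.
Qed.

Lemma interp_affine (rho : R -> X -> R) i : (i < N)%N -> exists a b : X -> R,
    forall t, in_cell N i t -> forall x, interp N rho t x = a x + b x * t.
Proof.
move=> iN.
have h0 : hstep N != 0 :> R by rewrite gt_eqF // hstep_gt0.
exists (fun x => rho (tgrid N i) x - tgrid N i * (rho (tgrid N i.+1) x - rho (tgrid N i) x) / hstep N).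
exists (fun x => (rho (tgrid N i.+1) x - rho (tgrid N i) x) / hstep N).
move=> t /(cell_in NP iN) ct x; rewrite /interp ct; field => //.
Qed.

Lemma avg_V0e (m : R -> X -> X -> R) : V0e N (avg_e N m).
Proof.
move=> i iN s t hs ht; apply: funext => x; apply: funext => y.
by rewrite /avg_e /avg (cell_in NP iN hs) (cell_in NP iN ht).
Qed.

End E.

Lemma rineq {R : realType} (u v m B : R) : 0 < u * u + v * v -> `|m| <= B ->
  ((u + v) * m) ^+ 2 / ((u * u + v * v) / 2) <= 4 * B ^+ 2.
Proof.
move=> p mb.
have m2 : m ^+ 2 <= B ^+ 2.
  rewrite -(real_normK (num_real m)); have := normr_ge0 m; nra.
rewrite ler_pdivrMr; last by apply: divr_gt0.
have := sqr_ge0 (u - v); have := sqr_ge0 m; nra.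
Qed.

Lemma cont_meas {R : realType} (g : R -> R) : continuous g ->
  measurable_fun I01 g /\ (@lebesgue_measure R).-integrable I01 (fun t => (g t)%:E).
Proof.
move=> cg; split.
  exact: (measurable_funS measurableT (@subsetT _ _) (continuous_measurable_fun cg)).
apply: continuous_compact_integrable; first exact: segment_compact.
exact: continuous_subspaceT.
Qed.


End Helpers.
Import Helpers.
Unset Implicit Arguments. Set Strict Implicit.

Theorem proposition3p3 (R : realType) (X : finType) (Q : X -> X -> R)
    (pi : X -> R) (th : R -> R -> R) :
  markov_setting Q pi -> mean_fun th ->
  exists C : R, forall rhoA : X -> R, density pi rhoA ->
    exists (rho : R -> X -> R) (m : R -> X -> X -> R),
      ((CE Q pi rhoA (fun _ => 1) rho m) /\ ((forall x, {within I01, continuous (fun t => rho t x)})) /\ ((action Q pi th rho m <= C%:E)%E) /\ (forall N : nat, (0 < N)%N ->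
            CEh Q N rhoA (fun _ => 1) (interp N rho) (avg_e N m) /\
            (action_h Q pi th N (interp N rho) (avg_e N m) <= C%:E)%E)).
Proof.
move=> [Q0 [Qd [Qc [pi0 [pis rev]]]]] [_ [_ [_ [_ [_ [_ [thd [thp [th0 thm]]]]]]]]].
have [B [B0 HB]] := poisson_mx Q0 Qc pi0 rev.
pose K0 := \sum_z ((pi z)^-1 + 1).
pose Bm := 2 * B * K0.
exists (2^-1 * (4 * Bm ^+ 2 * SS Q pi)).
move=> rhoA [rA0 rAs].
pose f := fun x => rhoA x - 1.
have fE : forall x, f x = rhoA x - 1 by [].
have fm : \sum_x pi x * f x = 0.
  rewrite /f; under eq_bigr do rewrite mulrBr mulr1.
  by rewrite sumrB rAs pis subrr.
have [psi [Lpsi bpsi]] := HB f fm.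
pose M := fun x y => psi y - psi x.
have divM : forall x, divX Q M x = f x.
  by move=> x; rewrite -Lpsi /divX /Lg /M mulr_sumr; apply: eq_bigr => y _; field.
have rAle : forall z, rhoA z <= (pi z)^-1.
  move=> z; rewrite -[X in _ <= X]mulr1 ler_pdivlMl // -rAs (bigD1 z) //= ler_wpDr //.
  by apply: sumr_ge0 => w _; apply: mulr_ge0; [exact: ltW|].
have K0b : \sum_z `|f z| <= K0.
  apply: ler_sum => z _; rewrite /f; apply: le_trans (ler_normB _ _) _.
  by rewrite normr1 ger0_norm // lerD2r.
have Mb : forall x y, `|M x y| <= Bm.
  move=> x y; rewrite /M /Bm; apply: le_trans (ler_normB _ _) _.
  have h : forall z, `|psi z| <= B * K0.
    move=> z; apply: le_trans (bpsi z) _; exact: ler_wpM2l.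
  by have := h x; have := h y; lra.
have Bm0 : 0 <= Bm.
  rewrite /Bm; apply: mulr_ge0; first by apply: mulr_ge0.
  by apply: sumr_ge0 => z _; apply: addr_ge0 => //; rewrite invr_ge0 ltW.
have B40 : 0 <= 4 * Bm ^+ 2 by apply: mulr_ge0 => //; exact: sqr_ge0.
exists (rhoT rhoA f), (mT M).
have crho : forall x, continuous (fun t => rhoT rhoA f t x) by move=> x; rewrite /rhoT; cont.
have cm : forall x y, continuous (fun t => mT M t x y) by move=> x y; rewrite /mT; cont.
have lbr : forall u z, 0 <= u <= 1 -> u * u <= rhoT rhoA f u z.
  move=> u z /andP[u0 u1]; rewrite /rhoT fE.
  have h1 : u * u <= 1 by apply: mulr_ile1.
  have h3 : 0 <= 1 - u * u by rewrite subr_ge0.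
  have h2 := mulr_ge0 h3 (rA0 z).
  nra.
have alpha_c : forall t, 0 <= t <= 1 -> forall x y,
    (alpha th (rhoT rhoA f t x) (rhoT rhoA f t y) (mT M t x y) <= (4 * Bm ^+ 2)%:E)%E.
  move=> t t01 x y; have [t0 t1] := andP t01.
  have [->|tn0] := eqVneq t 0.
    rewrite /mT mulr0 mul0r alpha_m0 ?lee_fin //; rewrite /rhoT mulr0 mul0r subr0 //.
  have tpos : 0 < t by rewrite lt_def tn0.
  apply: le_trans (alpha_le thm thd (mT M t x y) (mulr_gt0 tpos tpos) (lbr _ x t01) (lbr _ y t01)) _.
  rewrite lee_fin /mT.
  have -> : (2 * t * M x y) ^+ 2 / (t * t) = ((t + t) * M x y) ^+ 2 / ((t * t + t * t) / 2).
    by field; rewrite tn0 andbT gt_eqF //; apply: addr_gt0; apply: mulr_gt0.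
  by apply: rineq => //; apply: addr_gt0; apply: mulr_gt0.
have alpha_d : forall N, (0 < N)%N -> forall t x y,
    (alpha th (avg_n N (interp N (rhoT rhoA f)) t x) (avg_n N (interp N (rhoT rhoA f)) t y)
       (avg_e N (mT M) t x y) <= (4 * Bm ^+ 2)%:E)%E.
  move=> N NP t x y; rewrite !avg_interp // avg_m //.
  set c := cell N t.
  have cN : (c < N)%N by exact: cell_lt.
  set u := tgrid N c; set v := tgrid N c.+1.
  have u0 : 0 <= u by exact: tgrid_ge0.
  have u1 : u <= 1 by apply: tgrid_le1 => //; exact: ltnW.
  have v1 : v <= 1 by exact: tgrid_le1.
  have vE : v = u + hstep N by rewrite /v tgridSE.
  have hp := hstep_gt0 NP (R := R).
  have vp : 0 < v by rewrite vE; apply: ltr_wpDl.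
  have sp : 0 < u * u + v * v by apply: ltr_wpDl; [exact: mulr_ge0 | exact: mulr_gt0].
  have lb : forall z, (u * u + v * v) / 2 <= (rhoT rhoA f u z + rhoT rhoA f v z) / 2.
    move=> z; rewrite ler_pM2r ?invr_gt0 //; apply: lerD; apply: lbr; apply/andP; split => //; exact: ltW.
  apply: le_trans (alpha_le thm thd _ _ (lb x) (lb y)) _; first by apply: divr_gt0.
  by rewrite lee_fin; apply: rineq.
split.
  split; first by move=> x; exact: (cont_meas (crho x)).1.
  split; first by move=> x y; exact: (cont_meas (cm x y)).1.
  split; first by move=> x; exact: (cont_meas (crho x)).2.
  split; first by move=> x y; exact: (cont_meas (cm x y)).2.
  by move=> phi tf; exact: (weak_form rev divM fE tf).
split; first by move=> x; exact: continuous_subspaceT (crho x).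
split; first exact: (action_bound Q0 pi0 B40 alpha_c).
move=> N NP.
have h0 : hstep N != 0 :> R by rewrite gt_eqF // hstep_gt0.
split; last first.
  rewrite /action_h.
  have -> : avg_e N (avg_e N (mT M)) = avg_e N (mT M).
    by apply: funext => t; apply: funext => x; apply: funext => y; rewrite avg_avg.
  exact: (action_bound Q0 pi0 B40 (fun t (_ : 0 <= t <= 1) => alpha_d N NP t)).
split.
  split; first by move=> x; exact: interp_cont.
  by move=> i iN; exact: interp_affine.
split; first exact: avg_V0e.
split.
  rewrite (interp_grid NP _ (leq0n N)) tgrid0; apply: funext => x.
  by rewrite /rhoT mulr0 mul0r subr0.
split.
  rewrite (interp_grid NP _ (leqnn N)) tgridN //; apply: funext => x.
  by rewrite /rhoT fE mulr1 mul1r opprB addrC subrK.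
move=> i iN x.
rewrite (interp_grid NP _ iN) (interp_grid NP _ (ltnW iN)).
have -> : avg_e N (mT M) (tgrid N i) = fun a b => (tgrid N i + tgrid N i.+1) * M a b.
  by apply: funext => a; apply: funext => b; rewrite avg_m // cell_grid.
rewrite divX_scale divM /rhoT tgridSE; field => //.
Qed.
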